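(* There is a finite set $D$ and an infinite set $\Omega \subseteq \mathbf{W}_D$ of weightings such that $\mathrm{wPol}(\mathrm{Imp}(\Omega)) \neq \mathrm{wClone}(\Omega)$.
   Context: Let $\overline{\mathbb{Q}}=\mathbb{Q}\cup\{\infty\}$. An $m$-ary weighted relation on a finite set $D$ ($m\ge1$) is a map $\gamma:D^m\to\overline{\mathbb{Q}}$; $\mathbf{\Phi}_D$ denotes the set of all of them, and $\mathrm{Feas}(\gamma)=\{\mathbf{x}:\gamma(\mathbf{x})<\infty\}$. A $k$-ary operation is a map $f:D^k\to D$, applied to tuples coordinatewise; $f$ is a polymorphism of $\gamma$ if $f(\mathbf{x}_1,\dots,\mathbf{x}_k)\in\mathrm{Feas}(\gamma)$ whenever all $\mathbf{x}_i\in\mathrm{Feas}(\gamma)$; $\mathrm{Pol}(\Gamma)$ is the set of common polymorphisms of all $\gamma\in\Gamma$. Projections are $e^{(k)}_i(x_1,\dots,x_k)=x_i$. The superposition $f[g_1,\dots,g_k]$ of a $k$-ary $f$ with $\ell$-ary $g_i$ is $\mathbf{x}\mapsto f(g_1(\mathbf{x}),\dots,g_k(\mathbf{x}))$. A clone is a set of operations containing all projections and closed under superposition; $C^{(k)}$ denotes its $k$-ary members. A $k$-ary weighting of a clone $C$ is a function $\omega:C^{(k)}\to\mathbb{Q}$ with $\sum_{f\in C^{(k)}}\omega(f)=0$ and $\omega(f)<0$ only if $f$ is a projection. For $g_1,\dots,g_k\in C^{(\ell)}$, the superposition $\omega[g_1,\dots,g_k]:C^{(\ell)}\to\mathbb{Q}$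 is $\omega[g_1,\dots,g_k](f')=\sum_{f\in C^{(k)}:f[g_1,\dots,g_k]=f'}\omega(f)$; it is proper if it is again a weighting. A weighted clone is a non-empty set of weightings of a fixed clone $C$ closed under scaling by non-negative rationals, addition of weightings of equal arity, and proper superposition with operations of $C$. $\mathbf{W}_D$ is the set of all weightings of all clones on $D$. For $\Omega\subseteq\mathbf{W}_D$, extend each weighting by zeros to a weighting of the smallest clone containing all clones underlying members of $\Omega$; $\mathrm{wClone}(\Omega)$ is the smallest weighted clone containing these extended weightings. A $k$-ary weighting $\omega$ of a clone $C$ is a weighted polymorphism of $\gamma$ ($\gamma$ is improved by $\omega$) if $C\subseteq\mathrm{Pol}(\gamma)$ and for all $\mathbf{x}_1,\dots,\mathbf{x}_k\in\mathrm{Feas}(\gamma)$, $\sum_{f\in C^{(k)}}\omega(f)\gamma(f(\mathbf{x}_1,\dots,\mathbf{x}_k))\le0$. $\mathrm{Imp}(\Omega)$ is the set of weighted relations in $\mathbf{\Phi}_D$ improved by every $\omega\in\Omega$; for $\Gamma\subseteq\mathbf{\Phi}_D$, $\mathrm{wPol}(\Gamma)$ is the set of all weightings of the clone $\mathrm{Pol}(\Gamma)$ that are weighted polymorphisms of every $\gamma\in\Gamma$. *)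

(* Defs.v *)
From HB Require Import structures.
From mathcomp Require Import all_boot all_algebra.
From mathcomp Require Import boolp classical_sets cardinality.
Set Implicit Arguments. Unset Strict Implicit. Unset Printing Implicit Defensive.
Import GRing.Theory Num.Theory.
Local Open Scope ring_scope.

Section WeightedClones.
Variable D : finType.

Definition tup (m : nat) := {ffun 'I_m -> D}.
Definition op (k : nat) := {ffun tup k -> D}.

Definition proj (k : nat) (i : 'I_k) : op k := [ffun x : tup k => x i].
Definition is_proj k (f : op k) : Prop := exists i : 'I_k, f = proj i.

Definition superpos k l (f : op k) (g : 'I_k -> op l) : op l :=
  [ffun x : tup l => f [ffun i => g i x]].

(* a set of operations, graded by arity; arity 0 is never used (operations
   have arity k >= 1), enforced by C 0 being empty in is_clone *)
Definition cloneT := forall k : nat, {set op k}.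

Definition is_clone (C : cloneT) : Prop :=
  (forall f : op 0, f \notin C 0%N) /\
  (forall k (i : 'I_k), proj i \in C k) /\
  (forall k l (f : op k) (g : 'I_k -> op l),
      f \in C k -> (forall i, g i \in C l) -> superpos f g \in C l).

(* A weighting: an underlying clone, an arity and a rational function on
   k-ary operations (zero outside C^(k), which is how omega : C^(k) -> Q
   is represented canonically). *)
Record weighting := Weighting {
  wcl : cloneT; war : nat; wfun : {ffun op war -> rat} }.

Definition is_weighting (C : cloneT) k (w : {ffun op k -> rat}) : Prop :=
  (0 < k)%N /\
  (forall f, f \notin C k -> w f = 0) /\
  \sum_(f in C k) w f = 0 /\
  (forall f, f \in C k -> w f < 0 -> is_proj f).

Definition W_D : set weighting :=
  [set w | is_clone (wcl w) /\ is_weighting (wcl w) (wfun w)].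

(* weighted relations: gamma : D^m -> Q u {oo}, with None = oo *)
Record wrel := WRel { wr_ar : nat; wr_fun : {ffun tup wr_ar -> option rat} }.

Definition Phi_D : set wrel := [set g | (0 < wr_ar g)%N].

Definition feas (g : wrel) (x : tup (wr_ar g)) : bool := wr_fun g x != None.

Definition app k m (f : op k) (x : 'I_k -> tup m) : tup m :=
  [ffun j => f [ffun i => x i j]].

Definition is_pol k (f : op k) (g : wrel) : Prop :=
  forall x : 'I_k -> tup (wr_ar g), (forall i, feas (x i)) -> feas (app f x).

Definition Pol (G : set wrel) : cloneT :=
  fun k => finset (fun f : op k => `[< (0 < k)%N /\ forall g, G g -> is_pol f g >]).

(* omega is a weighted polymorphism of gamma; since the clone is contained in
   Pol(gamma), every gamma(f(x_1..x_k)) below is finite (so odflt 0 is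
   never used on an infinite value). *)
Definition wpol (w : weighting) (g : wrel) : Prop :=
  (forall k, wcl w k \subset Pol [set g] k) /\
  forall x : 'I_(war w) -> tup (wr_ar g), (forall i, feas (x i)) ->
    \sum_(f in wcl w (war w)) wfun w f * odflt 0 (wr_fun g (app f x)) <= 0.

Definition Imp (Om : set weighting) : set wrel :=
  [set g | Phi_D g /\ forall w, Om w -> wpol w g].

Definition wPol (G : set wrel) : set weighting :=
  [set w | (forall k, wcl w k = Pol G k) /\ is_weighting (wcl w) (wfun w) /\
           forall g, G g -> wpol w g].

Definition wsup (C : cloneT) k l (w : {ffun op k -> rat}) (g : 'I_k -> op l)
  : {ffun op l -> rat} :=
  [ffun f' => \sum_(f in C k | superpos f g == f') w f].

Definition is_wclone (C : cloneT) (P : forall k, {ffun op k -> rat} -> Prop)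
  : Prop :=
  (exists k (w : {ffun op k -> rat}), P k w) /\
  (forall k w, P k w -> is_weighting C w) /\
  (forall k w (c : rat), 0 <= c -> P k w -> P k [ffun f => c * w f]) /\
  (forall k w1 w2, P k w1 -> P k w2 -> P k [ffun f => w1 f + w2 f]) /\
  (forall k l w (g : 'I_k -> op l), P k w -> (forall i, g i \in C l) ->
      is_weighting C (wsup C w g) -> P l (wsup C w g)).

Definition gen_clone (Om : set weighting) : cloneT :=
  fun k => finset (fun f : op k => `[< forall C, is_clone C ->
      (forall w, Om w -> forall j, wcl w j \subset C j) -> f \in C k >]).

(* wClone(Om): smallest weighted clone (over gen_clone Om) containing the
   members of Om extended by zeros (the representation wfun is already zero
   outside the underlying clone, so the extension is wfun itself). *)
Definition wClone (Om : set weighting) : set weighting :=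
  [set w | (forall k, wcl w k = gen_clone Om k) /\
     forall P, is_wclone (gen_clone Om) P ->
       (forall w', Om w' -> P (war w') (wfun w')) -> P (war w) (wfun w)].

End WeightedClones.

(* Main.v *)
Require Import Defs.
From mathcomp Require Import all_boot all_order all_algebra.
From mathcomp Require Import boolp classical_sets cardinality.
From mathcomp Require Import ring lra.
Import Order.TTheory GRing.Theory Num.Theory.
Set Implicit Arguments. Unset Strict Implicit. Unset Printing Implicit Defensive.
Local Open Scope ring_scope.

Notation T3 := ('I_3).
Definition Cfull : cloneT T3 := fun k => [set f : op T3 k | (0 < k)%N].
Definition i0 : T3 := @Ordinal 3 0 isT.
Definition i1 : T3 := @Ordinal 3 1 isT.
Definition i2 : T3 := @Ordinal 3 2 isT.
Definition st (t : T3) : tup T3 1 := [ffun _ => t].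
Definition hf : op T3 1 := [ffun z : tup T3 1 => if z ord0 == i0 then i0 else i1].
Definition c0 : op T3 1 := [ffun _ => i0].
Definition idf : op T3 1 := @proj T3 1 ord0.
Definition dl (a f : op T3 1) : rat := (f == a)%:R.
Definition wf : {ffun op T3 1 -> rat} := [ffun f => dl hf f - dl idf f].
Definition vf : {ffun op T3 1 -> rat} := [ffun f => dl c0 f - dl idf f].
Definition omf (n : nat) : {ffun op T3 1 -> rat} := [ffun f => n%:R * wf f + vf f].
Definition om (n : nat) : weighting T3 := @Weighting T3 Cfull 1 (omf n).
Definition w0 : weighting T3 := @Weighting T3 Cfull 1 wf.

Lemma st_inj (a b : T3) : (st a == st b) = (a == b).
Proof.
apply/eqP/eqP => [/ffunP /(_ ord0)|->//]; by rewrite !ffunE.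
Qed.

Lemma app1 (f : op T3 1) (x : 'I_1 -> tup T3 1) : app f x = st (f (st (x ord0 ord0))).
Proof.
apply/ffunP => j; rewrite !ffunE; congr (f _); apply/ffunP => i.
by rewrite !ffunE (ord1 i) (ord1 j).
Qed.

Lemma hfE t : hf (st t) = if t == i0 then i0 else i1.
Proof. by rewrite ffunE ffunE. Qed.
Lemma c0E t : c0 (st t) = i0.
Proof. by rewrite ffunE. Qed.
Lemma idfE t : idf (st t) = t.
Proof. by rewrite ffunE ffunE. Qed.

Lemma hf_id : (hf == idf) = false.
Proof. apply/eqP => /ffunP /(_ (st i2)); by rewrite hfE idfE. Qed.
Lemma c0_id : (c0 == idf) = false.
Proof. apply/eqP => /ffunP /(_ (st i1)); by rewrite c0E idfE. Qed.

Lemma delta_sum (a : op T3 1) (X : op T3 1 -> rat) :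
  \sum_f dl a f * X f = X a.
Proof.
rewrite (bigD1 a) //= /dl eqxx mul1r big1 ?addr0 // => f /negbTE ->.
by rewrite mul0r.
Qed.

Lemma sum_lin (n : nat) (X : op T3 1 -> rat) :
  \sum_f omf n f * X f = n%:R * (X hf - X idf) + (X c0 - X idf).
Proof.
transitivity (\sum_f (n%:R * (dl hf f * X f) - n%:R * (dl idf f * X f)
   + dl c0 f * X f - dl idf f * X f)).
  by apply: eq_bigr => f _; rewrite !ffunE; ring.
by rewrite sumrB big_split sumrB /= -!mulr_sumr !delta_sum; ring.
Qed.

Lemma sum_w (X : op T3 1 -> rat) : \sum_f wf f * X f = X hf - X idf.
Proof.
transitivity (\sum_f (dl hf f * X f - dl idf f * X f)).
  by apply: eq_bigr => f _; rewrite !ffunE; ring.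
by rewrite sumrB !delta_sum.
Qed.

Definition nu k (u : {ffun op T3 k -> rat}) (x : 'I_k -> tup T3 1) (s : tup T3 1) : rat :=
  \sum_f u f * (app f x == s)%:R.
Definition Rc (a0 a1 : rat) : Prop := 0 < a0 \/ (a0 = 0 /\ a1 <= 0).
Definition Pw k (u : {ffun op T3 k -> rat}) : Prop :=
  is_weighting Cfull u /\ forall x, Rc (nu u x (st i0)) (nu u x (st i1)).

Lemma nu_om n x s : nu (omf n) x s =
  n%:R * ((hf (st (x ord0 ord0)) == s ord0)%:R - (x ord0 ord0 == s ord0)%:R)
  + ((i0 == s ord0)%:R - (x ord0 ord0 == s ord0)%:R).
Proof.
have Hs : s = st (s ord0) by apply/ffunP => j; rewrite ffunE (ord1 j).
by rewrite /nu sum_lin !app1 [in LHS]Hs !st_inj c0E idfE.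
Qed.

Lemma nu_w x s : nu wf x s =
  (hf (st (x ord0 ord0)) == s ord0)%:R - (x ord0 ord0 == s ord0)%:R.
Proof.
have Hs : s = st (s ord0) by apply/ffunP => j; rewrite ffunE (ord1 j).
by rewrite /nu sum_w !app1 [in LHS]Hs !st_inj idfE.
Qed.



Lemma sum_all k (u : op T3 k -> rat) : (0 < k)%N ->
  \sum_(f in Cfull k) u f = \sum_f u f.
Proof. by move=> hk; apply: eq_bigl => f; rewrite inE hk. Qed.

Lemma om_weighting n : is_weighting Cfull (omf n).
Proof.
split=> //; split; first by move=> f; rewrite inE.
split.
  rewrite sum_all //.
  under eq_bigr do rewrite -[omf n _]mulr1.
  by rewrite sum_lin !subrr mulr0 addr0.
move=> f _; case: (eqVneq f idf) => [->|Hf]; first by exists ord0.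
rewrite !ffunE /dl (negbTE Hf) !subr0 => H; exfalso; move: H.
by rewrite ltNge addr_ge0 // mulr_ge0.
Qed.

Lemma w_weighting : is_weighting Cfull wf.
Proof.
split=> //; split; first by move=> f; rewrite inE.
split.
  rewrite sum_all //.
  under eq_bigr do rewrite -[wf _]mulr1.
  by rewrite sum_w subrr.
move=> f _; case: (eqVneq f idf) => [->|Hf]; first by exists ord0.
rewrite !ffunE /dl (negbTE Hf) !subr0 => H; exfalso; move: H.
by rewrite ltNge ler0n.
Qed.

Lemma w_notP : ~ Pw wf.
Proof.
move=> [_ /(_ (fun _ => st i2))]; rewrite /Rc !nu_w !ffunE /= !subr0; case; first by rewrite ltxx.
by move=> [_]; rewrite ler10.
Qed.

Lemma om_P n : Pw (omf n).
Proof.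
split.
  exact: om_weighting.
move=> x; rewrite !nu_om !ffunE.
case: (x ord0 ord0) => [[|[|[|m]]] Hm] //=; rewrite /Rc.
  by right; rewrite !subrr !mulr0 !addr0.
  by left; rewrite subrr mulr0 add0r subr0 ltr01.
by left; rewrite subrr mulr0 add0r subr0 ltr01.
Qed.

Lemma app_sup k l m (f : op T3 k) (g : 'I_k -> op T3 l) (y : 'I_l -> tup T3 m) :
  app (superpos f g) y = app f (fun i => app (g i) y).
Proof.
apply/ffunP => j; rewrite !ffunE; congr (f _); apply/ffunP => i.
by rewrite !ffunE.
Qed.

Lemma RcZ c a0 a1 : 0 <= c -> Rc a0 a1 -> Rc (c * a0) (c * a1).
Proof.
rewrite le0r => /orP[/eqP->|hc]; first by rewrite !mul0r => _; right.
case=> [h|[-> h]]; first by left; rewrite mulr_gt0.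
by right; rewrite mulr0; split => //; rewrite pmulr_rle0.
Qed.

Lemma RcD a0 a1 b0 b1 : Rc a0 a1 -> Rc b0 b1 -> Rc (a0 + b0) (a1 + b1).
Proof. rewrite /Rc; lra. Qed.

Lemma nuZ k c (u : {ffun op T3 k -> rat}) x s :
  nu [ffun f => c * u f] x s = c * nu u x s.
Proof. by rewrite /nu mulr_sumr; apply: eq_bigr => f _; rewrite ffunE mulrA. Qed.

Lemma nuD k (u v : {ffun op T3 k -> rat}) x s :
  nu [ffun f => u f + v f] x s = nu u x s + nu v x s.
Proof. by rewrite /nu -big_split; apply: eq_bigr => f _; rewrite ffunE mulrDl. Qed.

Lemma nu_sup k l (u : {ffun op T3 k -> rat}) (g : 'I_k -> op T3 l) y s :
  (0 < k)%N ->
  nu (wsup Cfull u g) y s = nu u (fun i => app (g i) y) s.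
Proof.
move=> hk; rewrite /nu.
have E : forall f', \sum_(f in Cfull k | superpos f g == f') u f
   = \sum_(f | superpos f g == f') u f.
  by move=> f'; apply: eq_bigl => f; rewrite inE hk.
under eq_bigr do rewrite ffunE E mulr_suml big_mkcond.
rewrite exchange_big /=; apply: eq_bigr => f _.
rewrite -big_mkcond /= (big_pred1 (superpos f g)) ?app_sup //.
Qed.

Lemma Pw_wclone : is_wclone Cfull Pw.
Proof.
split.
  exists 1%N, [ffun _ => 0]; split.
    split=> //; split; first by move=> f; rewrite ffunE.
    split; first by rewrite big1 // => f _; rewrite ffunE.
    by move=> f _; rewrite ffunE ltxx.
  move=> x; rewrite /nu big1 ?[X in Rc _ X]big1; try by move=> f _; rewrite ffunE mul0r.
  by right.
split; first by move=> k w [].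
split.
  move=> k w c hc [[hk [h0 [hs hn]]] hR]; split.
    split=> //; split; first by move=> f /h0; rewrite ffunE => ->; rewrite mulr0.
    split.
      transitivity (c * \sum_(f in Cfull k) w f); last by rewrite hs mulr0.
      by rewrite mulr_sumr; apply: eq_bigr => f _; rewrite ffunE.
    move=> f hf; rewrite ffunE => hlt; apply: hn => //.
    by rewrite ltNge; apply/negP => hge; move: hlt; rewrite ltNge mulr_ge0.
  by move=> x; rewrite !nuZ; apply: RcZ.
split.
  move=> k w1 w2 [[hk [h0 [hs hn]]] hR] [[_ [h0' [hs' hn']]] hR']; split.
    split=> //; split; first by move=> f hf; rewrite ffunE h0 // h0' // addr0.
    split.
      transitivity (\sum_(f in Cfull k) w1 f + \sum_(f in Cfull k) w2 f); last by rewrite hs hs' addr0.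
      by rewrite -big_split; apply: eq_bigr => f _; rewrite ffunE.
    move=> f hf; rewrite ffunE => hlt.
    case: (ltP (w1 f) 0) => h1; first exact: hn.
    by apply: hn' => //; lra.
  by move=> x; rewrite !nuD; apply: RcD.
move=> k l w g [[hk _] hR] hg hW; split => //.
by move=> y; rewrite !nu_sup //; apply: hR.
Qed.

Local Open Scope classical_set_scope.
Definition Om : set (weighting T3) := range om.

Lemma Cfull_clone : is_clone Cfull.
Proof.
split; first by move=> f; rewrite inE.
split; first by move=> k i; rewrite inE; case: i => i /=; case: k => // /ltn_trans; apply.
move=> k l f g; rewrite inE => hk hg; rewrite inE.
by have := hg (Ordinal hk); rewrite inE.
Qed.

Lemma gen_Cfull : gen_clone Om = Cfull.
Proof.
apply: functional_extensionality_dep => k; apply/setP => f.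
rewrite /gen_clone inE; apply/asboolP/idP.
  by apply; [exact: Cfull_clone | move=> w [n _ <-] j].
move=> hf C _ hC; have := hC (om 0) (ex_intro2 _ _ 0%N I erefl) k.
by move/fintype.subsetP; apply.
Qed.

Lemma Pol_Cfull k : Pol (Imp Om) k = Cfull k.
Proof.
apply/setP => f; rewrite /Pol !inE; apply/asboolP/idP => [[]//|hk].
split=> // g [_ hg].
have [/(_ k) /fintype.subsetP H _] := hg (om 0) (ex_intro2 _ _ 0%N I erefl).
have := H f; rewrite inE => /(_ hk); rewrite inE => /asboolP [_]; apply.
by [].
Qed.

Lemma archi_le0 (a b : rat) : (forall n : nat, n%:R * a + b <= 0) -> a <= 0.
Proof.
move=> H; rewrite leNgt; apply/negP => ha.
have hb : 0 <= `|b| / a by rewrite divr_ge0 // ltW.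
have := archi_boundP hb; set N := Num.Def.archi_bound _ => hN.
have := H N; rewrite leNgt => /negP; apply.
have : `|b| < N%:R * a by rewrite -ltr_pdivrMr.
have := ler_norm (- b); rewrite normrN; lra.
Qed.

Lemma w0_wPol : wPol (Imp Om) w0.
Proof.
split; first by move=> k; rewrite /= Pol_Cfull.
split; first exact: w_weighting.
move=> g [_ hg]; split.
  by have [H _] := hg (om 0) (ex_intro2 _ _ 0%N I erefl).
move=> x hx /=; rewrite sum_all // sum_w.
apply: archi_le0 => n.
have [_ /(_ x hx)] := hg (om n) (ex_intro2 _ _ n I erefl).
by rewrite /= sum_all // sum_lin; apply.
Qed.

Lemma w0_notwClone : ~ wClone Om w0.
Proof.
move=> [_ H]; apply: w_notP; apply: (H Pw).
  by rewrite gen_Cfull; exact: Pw_wclone.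
by move=> w' [n _ <-]; exact: om_P.
Qed.

Definition getv (w : weighting T3) : rat :=
  match war w as k return {ffun op T3 k -> rat} -> rat with
  | 1%N => fun u => u hf | _ => fun _ => 0 end (wfun w).

Lemma om_inj : injective om.
Proof.
move=> m n /(congr1 getv); rewrite /getv /= !ffunE /dl eqxx hf_id.
rewrite (_ : (hf == c0) = false).
  rewrite !subr0 /= mulr1 => h; rewrite mulr1n mulr1 in h.
  by apply/eqP; rewrite -(@eqr_nat rat) h.
by apply/eqP => /ffunP /(_ (st i1)); rewrite hfE c0E.
Qed.

Theorem lemma2 :
  exists (D : finType) (Om : set (weighting D)),
    Om `<=` @W_D D /\ infinite_set Om /\ wPol (Imp Om) <> wClone Om.
Proof.
exists T3, Om; split.
  by move=> w [n _ <-]; split; [exact: Cfull_clone | exact: om_weighting].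
split.
  move=> fin; apply: infinite_nat.
  apply: (card_le_finite _ fin).
  have := @inj_card_eq _ _ [set: nat] om (in2W om_inj).
  by move/card_eqPle => [].
move=> E; apply: w0_notwClone; rewrite -E; exact: w0_wPol.
Qed.
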